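(* Let $d\ge 1$, $n\ge 1$, and let $\mathbb{K}=\mathbb{Q}=\{h_1,\dots,h_n\}\subset\mathbb{R}^d$ be a set of $n$ pairwise distinct node representations. Consider the GATv2 family of scoring functions $$\mathcal{F}_{\mathrm{GATv2}}=\{e_{a,W,b} : d'\ge 1,\ a\in\mathbb{R}^{d'},\ W\in\mathbb{R}^{d'\times 2d},\ b\in\mathbb{R}^{d'}\},\qquad e_{a,W,b}(h_i,h_j)=a^{\top}\,\mathrm{LeakyReLU}\big(W[\,h_i\,\|\,h_j\,]+b\big),$$ with attention coefficients obtained by softmax normalization over keys. Then this family computes dynamic attention for $\mathbb{K}$ and $\mathbb{Q}$: for every map $\varphi:[n]\to[n]$ there exist parameters such that $e(h_i,h_{\varphi(i)})>e(h_i,h_j)$ (and hence $\alpha_{i\varphi(i)}>\alpha_{ij}$) for all $i\in[n]$ and all $j\neq\varphi(i)$.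
   Context: Here $\|$ denotes vector concatenation, $\mathrm{LeakyReLU}$ is applied coordinatewise with $\mathrm{LeakyReLU}(x)=x$ for $x\ge0$ and $cx$ for $x<0$ with a fixed slope $0<c<1$, and $[n]=\{1,\dots,n\}$. Dynamic scoring: a family $\mathcal{F}$ of functions $\mathbb{R}^d\times\mathbb{R}^d\to\mathbb{R}$ computes dynamic scoring for keys $\{k_1,\dots,k_n\}$ and queries $\{q_1,\dots,q_m\}$ if for every map $\varphi:[m]\to[n]$ there is $f\in\mathcal{F}$ with $f(q_i,k_{\varphi(i)})>f(q_i,k_j)$ for all $i\in[m]$ and all $j\neq\varphi(i)$. A family of attention functions computes dynamic attention if its scoring family computes dynamic scoring, possibly followed by a monotonic normalization such as softmax; the attention coefficients are $\alpha_{ij}=\exp(e(h_i,h_j))/\sum_{j'}\exp(e(h_i,h_{j'}))$. *)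

(* Defs.v *)
From mathcomp Require Import all_boot all_order all_algebra.
From mathcomp Require Import reals.
From mathcomp Require Import sequences exp.
Set Implicit Arguments. Unset Strict Implicit. Unset Printing Implicit Defensive.
Import Order.TTheory GRing.Theory Num.Theory.
Local Open Scope ring_scope.

Definition leaky_relu {R : realType} (c x : R) : R := if 0 <= x then x else c * x.

Definition gatv2_score {R : realType} (c : R) (d d' : nat)
  (a : 'cV[R]_d') (W : 'M[R]_(d', d + d)) (b : 'cV[R]_d')
  (x y : 'cV[R]_d) : R :=
  \sum_(k < d') a k ord0 * leaky_relu c ((W *m col_mx x y + b) k ord0).

Definition gatv2_alpha {R : realType} (c : R) (d d' n : nat)
  (a : 'cV[R]_d') (W : 'M[R]_(d', d + d)) (b : 'cV[R]_d')
  (h : 'I_n -> 'cV[R]_d) (i j : 'I_n) : R :=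
  expR (gatv2_score c a W b (h i) (h j)) /
  \sum_(j' < n) expR (gatv2_score c a W b (h i) (h j')).

(* Main.v *)
Require Import Defs.
From mathcomp Require Import all_boot all_order all_algebra.
From mathcomp Require Import reals.
From mathcomp Require Import sequences exp.
From mathcomp Require Import lra ring.
Import Order.TTheory GRing.Theory Num.Theory.
Local Open Scope ring_scope.

Definition dot {R : realType} {D : nat} (w v : 'cV[R]_D) : R :=
  \sum_k w k ord0 * v k ord0.

Lemma dotDl {R : realType} {D : nat} (w v' v : 'cV[R]_D) (e : R) :
  dot (w + e *: v') v = dot w v + e * dot v' v.
Proof.
rewrite /dot mulr_sumr -big_split /=; apply: eq_bigr => k _.
by rewrite !mxE mulrDl mulrA.
Qed.

Lemma dotBr {R : realType} {D : nat} (w u v : 'cV[R]_D) :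
  dot w (u - v) = dot w u - dot w v.
Proof.
rewrite /dot -sumrB; apply: eq_bigr => k _.
by rewrite !mxE mulrBr.
Qed.

Lemma dot_self_neq0 {R : realType} {D : nat} (v : 'cV[R]_D) :
  v != 0 -> dot v v != 0.
Proof.
move=> nz; apply/eqP => h0; move/eqP: nz; apply.
apply/matrixP => i j; rewrite (ord1 j) mxE.
have H := @psumr_eq0P R _ predT (fun k => v k ord0 * v k ord0) (fun k _ => sqr_ge0 (v k ord0)) h0.
by apply/eqP; have /eqP := H i isT; rewrite mulf_eq0 orbb.
Qed.

Lemma sum_seq_ge {R : realType} {T : eqType} (s : seq T) (F : T -> R) x :
  (forall y, 0 <= F y) -> x \in s -> F x <= \sum_(y <- s) F y.
Proof.
move=> F0; elim: s => [//|y s IH]; rewrite in_cons big_cons => /orP [/eqP->|xs].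
  by rewrite lerDl sumr_ge0.
by rewrite (le_trans (IH xs)) // lerDr.
Qed.

Lemma key {R : realType} (a b e : R) :
  b != 0 -> 1 + `|a| / `|b| <= e -> a + e * b != 0.
Proof.
move=> bnz he; apply/eqP => h.
have hb : 0 < `|b| by rewrite normr_gt0.
have q0 : 0 <= `|a| / `|b| by rewrite divr_ge0.
have e0 : 0 < e by lra.
have Ea : a = - (e * b) by lra.
have E : `|a| = e * `|b| by rewrite Ea normrN normrM gtr0_norm.
have : (1 + `|a| / `|b|) * `|b| <= e * `|b| by rewrite ler_pM2r.
rewrite mulrDl mul1r divfK ?gt_eqF // -E. lra.
Qed.

Lemma sep {R : realType} {D : nat} (s : seq 'cV[R]_D) :
  all (fun v => v != 0) s -> exists w : 'cV[R]_D, all (fun v => dot w v != 0) s.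
Proof.
elim: s => [_|v' s IH /= /andP [v'nz /IH [w /allP Hw]]]; first by exists 0.
pose e := 1 + \sum_(v <- v' :: s) `|dot w v| / `|dot v' v|.
have He : forall v, v \in v' :: s -> 1 + `|dot w v| / `|dot v' v| <= e.
  move=> v vin; rewrite /e lerD2l; apply: (@sum_seq_ge R _ _ (fun v => `|dot w v| / `|dot v' v|)) => //.
  by move=> y; rewrite divr_ge0.
exists (w + e *: v'); apply/(@allP _ (fun v => dot (w + e *: v') v != 0) (v' :: s)) => v vin; rewrite dotDl.
have [dv0|dvnz] := eqVneq (dot v' v) 0.
  have vs : v \in s by move: vin; rewrite in_cons => /orP [/eqP Ev|//]; by move: dv0; rewrite Ev => /eqP; rewrite (negbTE (@dot_self_neq0 R D v' v'nz)).
  by rewrite dv0 mulr0 addr0 Hw.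
by apply: key => //; apply: He.
Qed.

Definition T {R : realType} (c dl t : R) := leaky_relu c (t + dl) + (-2) * leaky_relu c t + leaky_relu c (t - dl).

Lemma T0 {R : realType} (c dl : R) : 0 < c -> c < 1 -> 0 < dl -> T c dl 0 = (1 - c) * dl.
Proof.
move=> hc0 hc1 hdl; rewrite /T /leaky_relu add0r sub0r.
have -> : 0 <= dl by lra.
have -> : (0 <= - dl) = false by apply: lt_geF; lra.
rewrite lexx /=. lra.
Qed.

Lemma Lpos {R : realType} (c x : R) : 0 <= x -> leaky_relu c x = x.
Proof. by move=> h; rewrite /leaky_relu h. Qed.

Lemma Lneg {R : realType} (c x : R) : x <= 0 -> leaky_relu c x = c * x.
Proof.
move=> h; rewrite /leaky_relu; case: ifP => // h'.
have -> : x = 0 by apply/eqP; rewrite eq_le h h'.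
by rewrite mulr0.
Qed.

Lemma Tfar {R : realType} (c dl t : R) : 0 < dl -> dl <= `|t| -> T c dl t = 0.
Proof.
move=> hdl; rewrite /T.
case: (lerP 0 t) => t0.
  rewrite ger0_norm // => ht.
  rewrite !Lpos; lra.
rewrite ltr0_norm // => ht.
rewrite !Lneg; lra.
Qed.

Theorem theorem2 (R : realType) (c : R) (hc0 : 0 < c) (hc1 : c < 1)
  (d n : nat) (hd : (1 <= d)%N) (hn : (1 <= n)%N)
  (h : 'I_n -> 'cV[R]_d) (hinj : injective h) :
  forall phi : 'I_n -> 'I_n,
    exists (d' : nat) (a : 'cV[R]_d') (W : 'M[R]_(d', d + d)) (b : 'cV[R]_d'),
      (1 <= d')%N /\
      (forall i j : 'I_n, j != phi i ->
         gatv2_score c a W b (h i) (h (phi i)) > gatv2_score c a W b (h i) (h j)) /\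
      (forall i j : 'I_n, j != phi i ->
         gatv2_alpha c a W b h i (phi i) > gatv2_alpha c a W b h i j).
Proof.
move=> phi.
pose z := fun p : 'I_n * 'I_n => (col_mx (h p.1) (h p.2) : 'cV[R]_(d + d)).
have zinj : injective z.
  move=> [p1 p2] [q1 q2]; rewrite /z /= => /eq_col_mx [/hinj -> /hinj ->] //.
pose s := [seq z pq.1 - z pq.2 | pq <- [seq pq <- enum (@predT (('I_n * 'I_n) * ('I_n * 'I_n))%type) | pq.1 != pq.2]].
have snz : all (fun v => v != 0) s.
  apply/allP => v /mapP [[p q]]; rewrite mem_filter /= => /andP [pq _] ->.
  by rewrite subr_eq0; apply: contra pq => /eqP /zinj ->.
have [w /allP Hw] := @sep R (d + d) s snz.
pose P := fun p => dot w (z p).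
have Pinj : forall p q, p != q -> P p != P q.
  move=> p q pq; rewrite -subr_eq0 /P -dotBr; apply: Hw.
  by apply/mapP; exists (p, q) => //; rewrite mem_filter /= pq mem_enum.
pose dl := (1 + \sum_p \sum_q `|P p - P q|^-1)^-1.
have S0 : 0 <= \sum_p \sum_q `|P p - P q|^-1.
  by apply: sumr_ge0 => p _; apply: sumr_ge0 => q _; rewrite invr_ge0.
have dl0 : 0 < dl by rewrite invr_gt0; lra.
have gap : forall p q, p != q -> dl < `|P p - P q|.
  move=> p q pq.
  have g0 : 0 < `|P p - P q| by rewrite normr_gt0 subr_eq0 Pinj.
  have : `|P p - P q|^-1 <= \sum_p \sum_q `|P p - P q|^-1.
    rewrite (bigD1 p) //= (bigD1 q) //= -addrA lerDl addr_ge0 //.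
      by apply: sumr_ge0 => q' _; rewrite invr_ge0.
    by apply: sumr_ge0 => p' _; apply: sumr_ge0 => q' _; rewrite invr_ge0.
  move=> Hle.
  rewrite /dl -[X in _ < X]invrK ltf_pV2 ?posrE ?invr_gt0 //; lra.
pose tgt := fun i => P (i, phi i).
pose W0 := (\matrix_(i < n, k < d + d) w k ord0 : 'M[R]_(n, d + d)).
pose b := col_mx (\col_(i < n) (dl - tgt i)) (col_mx (\col_(i < n) (- tgt i)) (\col_(i < n) (- dl - tgt i))).
pose a := (col_mx (const_mx 1) (col_mx (const_mx (-2)) (const_mx 1)) : 'cV[R]_(n + (n + n))).
pose W := col_mx W0 (col_mx W0 W0).
have EW : forall p (bb : 'cV[R]_n) i, (W0 *m z p + bb) i ord0 = P p + bb i ord0.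
  move=> p bb i; rewrite mxE; congr (_ + _); rewrite mxE /P /dot.
  by apply: eq_bigr => k _; rewrite mxE.
have Hscore : forall p, gatv2_score c a W b (h p.1) (h p.2) = \sum_i T c dl (P p - tgt i).
  move=> p; rewrite /gatv2_score !mul_col_mx !add_col_mx !big_split_ord /=.
  rewrite -!big_split /=; apply: eq_bigr => i _.
  rewrite !col_mxEu !col_mxEd !col_mxEu.
  rewrite -/(z p) !EW !mxE /T.
  have -> : P p + (dl - tgt i) = P p - tgt i + dl by ring.
  have -> : P p + (- dl - tgt i) = P p - tgt i - dl by ring.
  ring.
exists (n + (n + n))%N, a, W, b.
have Htgt : forall i, gatv2_score c a W b (h i) (h (phi i)) = (1 - c) * dl.
  move=> i; rewrite (Hscore (i, phi i)) (bigD1 i) //= subrr (T0 c dl hc0 hc1 dl0) big1 ?addr0 //.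
  move=> i' ii'; apply: Tfar => //; apply: ltW; apply: gap.
  by rewrite xpair_eqE negb_and eq_sym ii'.
have Hnt : forall i j, j != phi i -> gatv2_score c a W b (h i) (h j) = 0.
  move=> i j jn; rewrite (Hscore (i, j)) big1 // => i' _.
  apply: Tfar => //; apply: ltW; apply: gap.
  rewrite xpair_eqE negb_and; case: (eqVneq i i') => [<-|] //=.
have Hlt : forall i j, j != phi i ->
    gatv2_score c a W b (h i) (h (phi i)) > gatv2_score c a W b (h i) (h j).
  move=> i j jn; rewrite Htgt Hnt //; apply: mulr_gt0 => //; lra.
split; first by rewrite addn_gt0 hn.
split => // i j jn.
rewrite /gatv2_alpha ltr_pM2r ?ltr_expR ?Hlt // invr_gt0.
rewrite (bigD1 j) //=; apply: ltr_wpDr; first by apply: sumr_ge0 => k _; exact: ltW (expR_gt0 _).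
exact: expR_gt0.
Qed.
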